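(* Let $\Omega\in\mathbb{C}^{N\times N}$ be skew-Hermitian and let $A\neq 0$ be an eigenvector of $\mathrm{ad}_\Omega$ to the non-zero eigenvalue $i\varphi$, $\varphi\in\mathbb{R}\setminus\{0\}$. Then: (a) $A^\dagger$ is an eigenvector of $\mathrm{ad}_\Omega$ to the eigenvalue $-i\varphi$; (b) $A$ is nilpotent; (c) $[A,A^\dagger]\neq 0$ and $[\Omega,[A,A^\dagger]]=0$.
   Context: $\mathrm{ad}_\Omega(X)=[\Omega,X]=\Omega X-X\Omega$. *)

(* Defs.v *)
From HB Require Import structures.
From mathcomp Require Import all_boot all_order all_algebra.
From mathcomp Require Import complex.
From mathcomp Require Import all_classical all_reals.
Set Implicit Arguments. Unset Strict Implicit. Unset Printing Implicit Defensive.
Import Order.TTheory GRing.Theory Num.Theory.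
Local Open Scope ring_scope.

Definition dagger (R : realType) (N : nat) (A : 'M[R[i]]_N) : 'M[R[i]]_N :=
  (map_mx (@conjc R) A)^T.

Definition ad (R : realType) (N : nat) (Om X : 'M[R[i]]_N) : 'M[R[i]]_N :=
  Om *m X - X *m Om.

Definition skew_hermitian (R : realType) (N : nat) (Om : 'M[R[i]]_N) : Prop :=
  dagger Om = - Om.

(* k-th matrix power (works for any size N, including N = 0). *)
Definition mxpow (R : realType) (N : nat) (A : 'M[R[i]]_N) (k : nat) : 'M[R[i]]_N :=
  iter k (mulmx A) 1%:M.

Definition mx_nilpotent (R : realType) (N : nat) (A : 'M[R[i]]_N) : Prop :=
  exists k : nat, mxpow A k = 0.

Definition iphi (R : realType) (phi : R) : R[i] := Complex 0 phi.

(* Main.v *)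
Require Import Defs.
From HB Require Import structures.
From mathcomp Require Import all_boot all_order all_algebra.
From mathcomp Require Import complex.
From mathcomp Require Import all_classical all_reals.
Import Order.TTheory GRing.Theory Num.Theory.
Local Open Scope ring_scope.

Section Aux.
Variable R : realType.
Variable N : nat.
Implicit Types A B : 'M[R[i]]_N.

Lemma dagger_mul A B : dagger (A *m B) = dagger B *m dagger A.
Proof. by rewrite /dagger map_mxM trmx_mul. Qed.

Lemma daggerK A : dagger (dagger A) = A.
Proof.
apply/matrixP => i j; rewrite /dagger !mxE; exact: conjcK.
Qed.

Lemma daggerB A B : dagger (A - B) = dagger A - dagger B.
Proof. by rewrite /dagger map_mxD map_mxN linearB. Qed.

Lemma daggerN A : dagger (- A) = - dagger A.
Proof. by rewrite /dagger map_mxN linearN. Qed.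

Lemma daggerZ c A : dagger (c *: A) = (conjc c) *: dagger A.
Proof. by rewrite /dagger map_mxZ linearZ. Qed.

Lemma dagger0 : dagger (0 : 'M[R[i]]_N) = 0.
Proof. by rewrite /dagger map_mx0 trmx0. Qed.

Lemma dagger_eq0 A : (dagger A == 0) = (A == 0).
Proof.
apply/eqP/eqP => [h|->]; last exact: dagger0.
by rewrite -[A]daggerK h dagger0.
Qed.

Lemma frob A : dagger A *m A = 0 -> A = 0.
Proof.
move=> h; apply/matrixP => i j; rewrite mxE.
have := congr1 (fun M : 'M[R[i]]_N => M j j) h; rewrite !mxE => hs.
have hge : forall k, predT k -> 0 <= (dagger A) j k * A k j.
  by move=> k _; rewrite /dagger !mxE mulrC; exact: mulcJ_ge0.
have := @psumr_eq0P _ _ predT (fun k => (dagger A) j k * A k j) hge hs i isT.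
rewrite /dagger !mxE => /eqP; rewrite mulf_eq0 conjc_eq0 orbb => /eqP //.
Qed.

Lemma ad_mul Om A B : ad Om (A *m B) = ad Om A *m B + A *m ad Om B.
Proof.
by rewrite /ad mulmxBl mulmxBr !mulmxA addrA subrK.
Qed.

Lemma adB Om A B : ad Om (A - B) = ad Om A - ad Om B.
Proof.
rewrite /ad mulmxBr mulmxBl !opprB addrACA [RHS]addrACA.
by rewrite [- (Om *m B) + _]addrC.
Qed.

Lemma iphiN (phi : R) : iphi (- phi) = - iphi phi.
Proof. by apply/eqP; rewrite eq_complex /= oppr0 !eqxx. Qed.

Lemma conj_iphi (phi : R) : conjc (iphi phi) = iphi (- phi).
Proof. by []. Qed.

End Aux.

Lemma dagger1 (R : realType) n : dagger (1 : 'M[R[i]]_n.+1) = 1.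
Proof. by rewrite /dagger -idmxE map_mx1 trmx1. Qed.

Lemma dagger_mulr (R : realType) n (X Y : 'M[R[i]]_n.+1) :
  dagger (X * Y) = dagger Y * dagger X.
Proof. exact: dagger_mul. Qed.

Lemma dagger_exp (R : realType) n (H : 'M[R[i]]_n.+1) j :
  dagger H = H -> dagger (H ^+ j) = H ^+ j.
Proof.
move=> hH; elim: j => [|j IH]; first by rewrite !expr0 dagger1.
by rewrite exprSr dagger_mulr hH IH -exprS exprSr.
Qed.

Lemma herm_nil (R : realType) n (H : 'M[R[i]]_n.+1) k :
  dagger H = H -> H ^+ k = 0 -> H = 0.
Proof.
move=> hH; elim: k => [|k IH] hk.
  by move: hk; rewrite expr0 => /eqP; rewrite oner_eq0.
case: k IH hk => [|k] IH hk; first by rewrite -[H]expr1.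
apply: IH; apply: frob.
rewrite dagger_exp // mulmxE -exprD -addSnnS exprD hk mul0r //.
Qed.

Theorem lemma2p24 (R : realType) (N : nat) (Om A : 'M[R[i]]_N) (phi : R) :
  skew_hermitian Om ->
  A != 0 ->
  phi != 0 ->
  ad Om A = iphi phi *: A ->
  [/\ dagger A != 0 /\ ad Om (dagger A) = iphi (- phi) *: dagger A,
      mx_nilpotent A &
      (A *m dagger A - dagger A *m A != 0 /\
       ad Om (A *m dagger A - dagger A *m A) = 0)].
Proof.
move=> hOm hA hphi hAd.
have hAd' : ad Om (dagger A) = iphi (- phi) *: dagger A.
  have := congr1 (@dagger R N) hAd.
  rewrite daggerZ conj_iphi /ad daggerB !dagger_mul hOm => <-.
  by rewrite mulmxN mulNmx opprK addrC.
have hC : ad Om (A *m dagger A - dagger A *m A) = 0.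
  rewrite adB !ad_mul hAd hAd' -!scalemxAl -!scalemxAr iphiN !scaleNr.
  by rewrite addrN addNr subrr.
case: N Om A hOm hA hAd hAd' hC => [|n] Om A hOm hA hAd hAd' hC.
  by move: hA; rewrite (flatmx0 A) eqxx.
have mxpowE : forall k, mxpow A k = A ^+ k.
  elim => [|k IH] /=; first by rewrite idmxE.
  by rewrite /mxpow /= -/(mxpow A k) IH exprS mulmxE.
have hpow : forall k, ad Om (A ^+ k) = (k%:R * iphi phi) *: A ^+ k.
  elim => [|k IH].
    by rewrite /ad expr0 !mulmxE mulr1 mul1r subrr mul0r scale0r.
  rewrite exprS -mulmxE ad_mul IH hAd -scalemxAl -scalemxAr -scalerDl.
  by rewrite -[k.+1]addn1 natrD mulrDl mul1r addrC.
have hi0 : iphi phi != 0.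
  by apply: contra hphi => /eqP [->].
set M := lin_mulmx Om - lin_mulmxr Om.
have hv : forall X, mxvec X *m M = mxvec (ad Om X).
  by move=> X; rewrite mulmxBr /lin_mulmx /lin_mulmxr !mul_vec_lin /ad linearB.
have hnil : exists k, A ^+ k = 0.
  case: (boolP [exists k : 'I_(size (char_poly M)), A ^+ k == 0]).
    by case/existsP => k /eqP hk; exists k.
  move/existsPn => hne.
  set rs := mkseq (fun k => k%:R * iphi phi) (size (char_poly M)).
  have hall : all (root (char_poly M)) rs.
    apply/allP => x /mapP [k hk ->].
    rewrite mem_iota add0n in hk.
    rewrite -eigenvalue_root_char; apply/eigenvalueP.
    exists (mxvec (A ^+ k)); first by rewrite hv hpow linearZ.
    by rewrite mxvec_eq0; exact: (hne (Ordinal hk)).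
  have huniq : uniq rs.
    apply: mkseq_uniq => a b /(mulIf hi0) /eqP; rewrite eqr_nat => /eqP //.
  have := max_poly_roots (monic_neq0 (char_poly_monic M)) hall huniq.
  by rewrite size_mkseq ltnn.
split.
- by rewrite dagger_eq0.
- by case: hnil => k hk; exists k; rewrite mxpowE.
- split => //.
  apply/negP => /eqP hc.
  have hcomm : GRing.comm (dagger A) A.
    by rewrite /GRing.comm -!mulmxE; move/subr0_eq: hc => ->.
  case: hnil => k hk.
  have hH : (dagger A * A) ^+ k = 0 by rewrite exprMn_comm // hk mulr0.
  have hherm : dagger (dagger A * A) = dagger A * A.
    by rewrite -mulmxE dagger_mul daggerK.
  have := @herm_nil _ _ _ _ hherm hH => /frob /eqP.
  by rewrite (negbTE hA).
Qed.
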